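(* Let $p$ be an odd prime and $r$ an integer with $1\leq r<p-1$. Then ${r+p \brace p}_{\leq r}\equiv 0\pmod p$.
   Context: For integers $N\geq k\geq0$ and $r\ge1$, the $r$-restricted Stirling number of the second kind ${N \brace k}_{\leq r}$ is $\sum \frac{N!}{\prod_{m=1}^r j_m!(m!)^{j_m}}$ over $(j_1,\dots,j_r)\in\mathbb{N}^r$ with $\sum j_m=k$, $\sum m j_m=N$; equivalently the number of partitions of an $N$-element set into $k$ nonempty blocks of size at most $r$. *)

(* Defs.v *)
From mathcomp Require Import all_boot.
Set Implicit Arguments. Unset Strict Implicit. Unset Printing Implicit Defensive.

(* The index m : 'I_r stands for the block size m.+1 (so sizes 1..r);
   each j_m is bounded by N (automatic since m.+1 >= 1 and sum m j_m = N),
   so ranging over 'I_N.+1 loses nothing.  Each term is an integer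
   (a multinomial count), so the nat division is exact. *)
Definition rstirling (N k r : nat) : nat :=
  \sum_(j : {ffun 'I_r -> 'I_N.+1} |
          ((\sum_(m < r) (j m : nat)) == k) &&
          ((\sum_(m < r) (m.+1 * j m)) == N))
     (N`! %/ \prod_(m < r) ((j m)`! * (m.+1)`! ^ (j m))).

(* Main.v *)
Require Import Defs.
From mathcomp Require Import all_boot.

Lemma factA (n j : nat) : j`! * n.+1`! ^ j %| (n.+1 * j)`!.
Proof.
elim: j => [|j IH]; first by rewrite muln0.
have E : (n.+1 * j.+1) = n.+1 * j + n.+1 by rewrite mulnS addnC.
have Hb := @bin_fact (n.+1 * j + n.+1) n.+1 (leq_addl _ _).
rewrite addnK in Hb.
have Hd := mul_bin_diag (n.+1 * j + n.+1) n.
rewrite -E in Hd.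
have H2 : 'C(n.+1 * j.+1, n.+1) = j.+1 * 'C((n.+1 * j.+1).-1, n).
  apply/eqP; rewrite -(eqn_pmul2l (ltn0Sn n)) -Hd.
  by rewrite mulnA.
rewrite E -Hb -E H2 factS expnS.
rewrite mulnACA [X in _ %| X]mulnACA; apply: dvdn_mul => //; exact: dvdn_mull.
Qed.

Lemma factB (r : nat) (a : 'I_r -> nat) :
  \prod_(i < r) (a i)`! %| (\sum_(i < r) a i)`!.
Proof.
apply: (big_rec2 (fun x y => x %| y`!)) => // i x y _ H.
have Hb := @bin_fact (a i + y) (a i) (leq_addr _ _).
rewrite addKn in Hb.
rewrite -Hb; apply: dvdn_mull; exact: dvdn_mul.
Qed.

Lemma coprime_fact p n : prime p -> n < p -> coprime p n`!.
Proof.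
move=> pp; elim: n => [|n IH] Hn; first by rewrite coprimen1.
rewrite factS coprimeMr IH ?(ltnW Hn) // andbT prime_coprime //.
apply/negP => /dvdn_leq => /(_ (ltn0Sn n)); rewrite leqNgt Hn //.
Qed.

Theorem lemma3p12 (p r : nat) :
  prime p -> odd p -> 1 <= r -> r < p - 1 ->
  p %| rstirling (r + p) p r.
Proof.
move=> pp _ r1 rp.
rewrite /rstirling; apply: dvdn_sum => j /andP[/eqP Hs /eqP Hw].
set D := \prod_(m < r) _.
have H1 : D %| \prod_(m < r) (m.+1 * j m)`!.
  apply: (big_rec2 (fun x y => x %| y)) => // i x y _ H.
  exact: dvdn_mul (factA _ _) H.
have H2 : \prod_(m < r) (m.+1 * j m)`! %| (r + p)`!.
  by move: (@factB r (fun m : 'I_r => m.+1 * j m)); rewrite Hw.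
have DN := dvdn_trans H1 H2.
have jlt : forall m, j m < p.
  move=> m.
  have le : j m <= p.
    apply: leq_trans (_ : _ <= \sum_(i < r) (j i : nat)) _; last by rewrite Hs.
    by rewrite (bigD1 m) //= leq_addr.
  rewrite ltn_neqAle le andbT; apply/eqP => Ejm.
  have Hz : \sum_(i < r | i != m) (j i : nat) = 0.
    by move: Hs; rewrite (bigD1 m) //= Ejm => /(f_equal (fun x => x - p)); rewrite addKn subnn.
  have Hz' : forall i, i != m -> (j i : nat) = 0.
    move=> i im; apply/eqP; rewrite -leqn0; apply: leq_trans (_ : _ <= \sum_(i < r | i != m) (j i : nat)) _; last by rewrite Hz.
    by rewrite (bigD1 i) //= leq_addr.
  move: Hw; rewrite (bigD1 m) //= big1 => [|i im]; last by rewrite Hz' // muln0.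
  rewrite addn0 Ejm mulSn addnC => /eqP; rewrite eqn_add2r => /eqP Er.
  case: (nat_of_ord m) Er => [|k] Er; first by move: r1; rewrite -Er.
  have : p <= r by rewrite -Er mulSn leq_addr.
  by rewrite leqNgt (leq_trans rp (leq_subr 1 p)).
have cD : coprime p D.
  apply: (big_ind (fun x => coprime p x)) => //; first by rewrite coprimen1.
    by move=> x y Hx Hy; rewrite coprimeMr Hx Hy.
  move=> m _; rewrite coprimeMr coprime_fact // coprimeXr //.
  apply: coprime_fact => //; apply: leq_trans (leq_subr 1 p).
  exact: leq_ltn_trans (ltn_ord m) rp.
move: DN => /dvdnP [q Eq]; rewrite Eq mulnK; last first.
  by rewrite lt0n; apply/eqP => D0; move: cD; rewrite D0 /coprime gcdn0 => /eqP E1; move: pp; rewrite E1.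
have : p %| q * D by rewrite -Eq dvdn_fact // prime_gt0 // leq_addl.
by rewrite Gauss_dvdl.
Qed.
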